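(* Let $i\colon\mathcal{A}\to\mathcal{B}$ be an injective closed homomorphism of complete topological rings and let $S$ be a multiplicatively closed subset of $\mathcal{A}$. Then $\widehat{S^{-1}i}\colon\widehat{S^{-1}\mathcal{A}}\to\widehat{i(S)^{-1}\mathcal{B}}$ is an injective homomorphism of topological rings.
   Context: Topological rings are linearly topologized with a countable fundamental system of open ideals; homomorphisms are continuous; complete means the canonical map to $\varprojlim_{\mathfrak{a}}\mathcal{A}/\mathfrak{a}$ (open ideals, discrete quotients) is a topological isomorphism. A multiplicatively closed subset contains $1$ and is stable under multiplication. The separated completed localization $\widehat{S^{-1}\mathcal{A}}$ is the separated completion of $S^{-1}\mathcal{A}$ for the linear topology with fundamental system of ideals $S^{-1}\mathfrak{a}$, $\mathfrak{a}$ open in $\mathcal{A}$, with canonical map $\tilde j_{\mathcal{A}}\colon\mathcal{A}\to\widehat{S^{-1}\mathcal{A}}$ (similarly $\tilde j_{\mathcal{B}}\colon\mathcal{B}\to\widehat{i(S)^{-1}\mathcal{B}}$). $\widehat{S^{-1}i}$ is the unique continuous ring homomorphism with $\widehat{S^{-1}i}\circ\tilde j_{\mathcal{A}}=\tilde j_{\mathcal{B}}\circ i$. *)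

(* Defs.v *)
From HB Require Import structures.
From mathcomp Require Import all_boot all_order all_algebra.
Set Implicit Arguments. Unset Strict Implicit. Unset Printing Implicit Defensive.
Import GRing.Theory.
Local Open Scope ring_scope.

(* A linearly topologized commutative ring with a countable fundamental system
   of open ideals is modelled by a commutative ring R together with a
   decreasing sequence a : nat -> (R -> Prop) of ideals; the topology is the
   one for which {a n} is a fundamental system of neighbourhoods of 0
   (every open ideal contains some a n, and every a n is open). *)
Definition ideal_fund_system (R : comPzRingType) (a : nat -> R -> Prop) : Prop :=
  forall n,
  [/\ a n 0,
      (forall x y, a n x -> a n y -> a n (x - y)),
      (forall r x, a n x -> a n (r * x)) &
      (forall x, a n.+1 x -> a n x)].

(* Completeness: the canonical map R -> lim_n R / a n is bijective
   (it is then automatically a topological isomorphism).  An element of the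
   inverse limit is given by representatives x n with x m - x n \in a n
   for n <= m. *)
Definition lt_complete (R : comPzRingType) (a : nat -> R -> Prop) : Prop :=
  forall x : nat -> R,
    (forall n m, (n <= m)%N -> a n (x m - x n)) ->
    exists! y : R, forall n, a n (y - x n).

Definition lt_continuous (A B : comPzRingType) (a : nat -> A -> Prop)
  (b : nat -> B -> Prop) (f : A -> B) : Prop :=
  forall m, exists n, forall x, a n x -> b m (f x).

Definition lt_closed (R : comPzRingType) (a : nat -> R -> Prop) (C : R -> Prop) :=
  forall y, (forall n, exists c, C c /\ a n (y - c)) -> C y.

Definition lt_closed_map (A B : comPzRingType) (a : nat -> A -> Prop)
  (b : nat -> B -> Prop) (f : A -> B) : Prop :=
  forall C, lt_closed a C -> lt_closed b (fun y => exists x, C x /\ y = f x).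

Definition mult_closed (R : comPzRingType) (S : R -> Prop) : Prop :=
  S 1 /\ forall x y, S x -> S y -> S (x * y).

Definition image_set (A B : Type) (f : A -> B) (S : A -> Prop) : B -> Prop :=
  fun y => exists s, S s /\ y = f s.

(* x/s - y/u = (x u - y s)/(s u) *)
Definition frac_sub (R : comPzRingType) (p q : R * R) : R * R :=
  (p.1 * q.2 - q.1 * p.2, p.2 * q.2).

(* The fraction p = x/s lies in the ideal S^{-1} I of S^{-1} R:
   x/s = y/u with y \in I, u \in S, i.e. (unfolding) t * x \in I for some t \in S. *)
Definition frac_in (R : comPzRingType) (S : R -> Prop) (I : R -> Prop) (p : R * R) :=
  exists t, S t /\ I (t * p.1).

(* ---- Separated completion of S^{-1}R for the topology {S^{-1} a n}:
   Cauchy sequences of fractions modulo null sequences. *)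
Definition frac_cauchy (R : comPzRingType) (S : R -> Prop) (a : nat -> R -> Prop)
  (c : nat -> R * R) : Prop :=
  (forall k, S (c k).2) /\
  forall n, exists N, forall k l, (N <= k)%N -> (N <= l)%N ->
    frac_in S (a n) (frac_sub (c k) (c l)).

(* eventually in S^{-1} a n (the n-th open ideal of the completion) *)
Definition frac_ev_in (R : comPzRingType) (S : R -> Prop) (I : R -> Prop)
  (c : nat -> R * R) : Prop :=
  exists N, forall k, (N <= k)%N -> frac_in S I (c k).

Definition frac_null (R : comPzRingType) (S : R -> Prop) (a : nat -> R -> Prop)
  (c : nat -> R * R) : Prop := forall n, frac_ev_in S (a n) c.

Definition compl_eq (R : comPzRingType) (S : R -> Prop) (a : nat -> R -> Prop)
  (c c' : nat -> R * R) : Prop :=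
  frac_null S a (fun k => frac_sub (c k) (c' k)).

(* S^{-1} i on representatives, extended termwise to Cauchy sequences:
   this is hat(S^{-1} i) on the completion. *)
Definition frac_map (A B : Type) (f : A -> B) (c : nat -> A * A) : nat -> B * B :=
  fun k => (f (c k).1, f (c k).2).

(* Main.v *)
Require Import Defs.
From mathcomp Require Import all_boot all_order all_algebra.
From Stdlib Require Import Classical.
Local Open Scope ring_scope.
Import GRing.Theory.

Lemma map_sub (A B : comPzRingType) (i : {rmorphism A -> B}) (p q : A * A) :
  frac_sub (i p.1, i p.2) (i q.1, i q.2) = (i (frac_sub p q).1, i (frac_sub p q).2).
Proof. by rewrite /frac_sub /= rmorphB !rmorphM. Qed.

Lemma fin_map (A B : comPzRingType) (i : {rmorphism A -> B}) (S : A -> Prop)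
  (I : A -> Prop) (J : B -> Prop) (p : A * A) :
  frac_in S I p -> (forall x, I x -> J (i x)) ->
  frac_in (image_set i S) J (i p.1, i p.2).
Proof.
move=> [t [St It]] hIJ; exists (i t); split; first by exists t.
by rewrite /= -rmorphM; apply: hIJ.
Qed.

Theorem lemma1p21 (A B : comPzRingType)
  (a : nat -> A -> Prop) (b : nat -> B -> Prop)
  (ha : ideal_fund_system a) (hb : ideal_fund_system b)
  (hAc : lt_complete a) (hBc : lt_complete b)
  (i : {rmorphism A -> B})
  (hi_cont : lt_continuous a b i)
  (hi_inj : injective i)
  (hi_closed : lt_closed_map a b i)
  (S : A -> Prop) (hS : mult_closed S) :
  let iS := image_set i S in
  [/\ (* hat(S^{-1} i) is well defined on the completion *)
      (forall c, frac_cauchy S a c -> frac_cauchy iS b (frac_map i c)),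
      (forall c c', frac_cauchy S a c -> frac_cauchy S a c' ->
         compl_eq S a c c' -> compl_eq iS b (frac_map i c) (frac_map i c')),
      (* it is continuous *)
      (forall m, exists n, forall c, frac_cauchy S a c ->
         frac_ev_in S (a n) c -> frac_ev_in iS (b m) (frac_map i c)) &
      (* and injective *)
      (forall c c', frac_cauchy S a c -> frac_cauchy S a c' ->
         compl_eq iS b (frac_map i c) (frac_map i c') -> compl_eq S a c c')].
Proof.
move=> iS.
have emb : forall n, exists m, forall x, b m (i x) -> a n x.
  move=> n.
  have hC : lt_closed a (fun x => ~ a n x).
    move=> y hy Hy; have [c [Hc Hyc]] := hy n.
    have [_ hsub _ _] := ha n.
    apply: Hc; have := hsub _ _ Hy Hyc.
    by have -> : y - (y - c) = c by rewrite opprB addrC subrK.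
  have := hi_closed _ hC => hD.
  apply: NNPP => hne.
  have : exists x, ~ a n x /\ 0 = i x.
    apply: hD => m.
    apply: NNPP => hm; apply: hne; exists m => x hx.
    apply: NNPP => hax; apply: hm; exists (i x); split; first by exists x.
    have [_ hsub _ _] := hb m.
    have [h0 _ _ _] := hb m.
    by have := hsub _ _ h0 hx; rewrite sub0r.
  move=> [x [hx e]]; apply: hx.
  have -> : x = 0 by apply: hi_inj; rewrite rmorph0.
  by have [h0 _ _ _] := ha n.
split.
- move=> c [hS1 hc]; split.
    by move=> k; exists (c k).2.
  move=> m; have [n hn] := hi_cont m; have [N hN] := hc n.
  exists N => k l hk hl; rewrite /frac_map map_sub.
  by apply: fin_map (hN k l hk hl) _.
- move=> c c' _ _ hcc m; have [n hn] := hi_cont m; have [N hN] := hcc n.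
  exists N => k hk; rewrite /frac_map map_sub.
  by apply: fin_map (hN k hk) _.
- move=> m; have [n hn] := hi_cont m; exists n => c _ [N hN].
  by exists N => k hk; apply: fin_map (hN k hk) _.
- move=> c c' _ _ hcc n; have [m hm] := emb n; have [N hN] := hcc m.
  exists N => k hk; have := hN k hk; rewrite /frac_map map_sub.
  move=> [u' [[u [Su ->]] Hu]]; exists u; split => //.
  by apply: hm; rewrite rmorphM.
Qed.
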